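(* For all positive integers $\alpha$ and $k$, the graph $G^{\alpha+1}_{3k+3\alpha-1}$ satisfies $\mathrm{ecrw}_\alpha(G^{\alpha+1}_{3k+3\alpha-1})\ge k+1$.
   Context: For positive integers $n,k$, the graph $G^n_k$ is defined as follows: let $A=\{a_1,\dots,a_n\}$, let $B$ be the set of 2-element subsets of $A$, and let $B_k=\{(W,\ell):W\in B,\ \ell\in[k]\}$. Then $V(G^n_k)=A\cup B_k$, and $a\in A$ is adjacent to $(W,\ell)\in B_k$ iff $a\in W$; there are no other edges. A tree-cut decomposition of a graph $G$ is a pair $\mathcal{T}=(T,\{X_t\}_{t\in V(T)})$ where $T$ is a tree and the bags $X_t\subseteq V(G)$ are pairwise disjoint (possibly empty) with $\bigcup_{t\in V(T)}X_t=V(G)$. For a node $t$ of $T$, let $T_1,\dots,T_m$ be the connected components of $T-t$ and $Z_i=\bigcup_{s\in V(T_i)}X_s$; $\mathrm{cross}_{\mathcal{T}}(t)$ is the number of edges of $G$ whose two endpoints lie in two distinct sets among $Z_1,\dots,Z_m$ (if $T$ has one node, $\mathrm{cross}_{\mathcal T}(t)=0$). The crossing number of $\mathcal{T}$ is $\max_{t}\mathrm{cross}_{\mathcal{T}}(t)$, and the thickness of $\mathcal{T}$ is $\max_t|X_t|$. $\mathrm{ecrw}_\alpha(G)$ is the minimum crossing number over tree-cut decompositions of $G$ of thickness at most $\alpha$. *)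

(* Defs.v *)
From mathcomp Require Import all_boot.
Set Implicit Arguments. Unset Strict Implicit. Unset Printing Implicit Defensive.

(* A = 'I_n (a_1..a_n), B = 2-element subsets of A, B_k = B x [k] with [k] ~ 'I_k. *)
Definition pairs (n : nat) := {W : {set 'I_n} | #|W| == 2}.
Definition Gvert (n k : nat) : finType := ('I_n + (pairs n * 'I_k))%type.

Definition Gadj (n k : nat) : rel (Gvert n k) := fun x y =>
  match x, y with
  | inl a, inr (W, _) => a \in val W
  | inr (W, _), inl a => a \in val W
  | _, _ => false
  end.

Definition is_tree (T : finType) (e : rel T) : Prop :=
  [/\ symmetric e, irreflexive e,
      (forall x y : T, connect e x y)
    & (forall s : seq T, uniq s -> 2 < size s -> ~~ cycle e s)].

Definition is_tcd (V : finType) (T : finType) (e : rel T) (X : T -> {set V}) : Prop :=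
  [/\ is_tree e,
      (forall t1 t2 : T, t1 != t2 -> [disjoint X t1 & X t2])
    & (forall v : V, exists t : T, v \in X t)].

Definition rel_minus (T : finType) (e : rel T) (t : T) : rel T :=
  fun x y => [&& e x y, x != t & y != t].

(* u and v lie in two distinct sets among Z_1..Z_m (components of T - t) *)
Definition crosses (V T : finType) (e : rel T) (X : T -> {set V}) (t : T) (u v : V) : bool :=
  [exists a : T, exists b : T,
     [&& u \in X a, v \in X b, a != t, b != t & ~~ connect (rel_minus e t) a b]].

Definition cross (V : finType) (adj : rel V) (T : finType) (e : rel T)
  (X : T -> {set V}) (t : T) : nat :=
  #|[set E : {set V} | [exists u : V, exists v : V,
       [&& E == [set u; v], adj u v & crosses e X t u v]]]|.

Definition thickness_le (V T : finType) (X : T -> {set V}) (alpha : nat) : Prop :=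
  forall t : T, #|X t| <= alpha.

Definition ecrw_ge (V : finType) (adj : rel V) (alpha c : nat) : Prop :=
  forall (T : finType) (e : rel T) (X : T -> {set V}),
    is_tcd e X -> thickness_le X alpha ->
    exists t : T, c <= cross adj e X t.

(* Main.v *)
Require Import Defs.
From mathcomp Require Import all_boot zify.
Set Implicit Arguments. Unset Strict Implicit. Unset Printing Implicit Defensive.

Lemma split_has (T : eqType) (a : pred T) (s : seq T) : has a s ->
  exists q1 y q2, [/\ s = q1 ++ y :: q2, a y & ~~ has a q1].
Proof.
elim: s => [|h s IH] //= /orP [ah|hs].
  by exists [::], h, s.
case: (boolP (a h)) => ah; first by exists [::], h, s.
have [q1 [y [q2 [-> ay nq]]]] := IH hs.
by exists (h :: q1), y, q2; split => //=; rewrite negb_or ah.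
Qed.

Lemma path_avoid (T : finType) (e : rel T) t x s :
  path (rel_minus e t) x s -> all (fun z => z != t) s.
Proof.
elim: s x => [|h s IH] x //= /andP [/and3P [_ _ ht] ps].
by rewrite ht (IH h).
Qed.

Lemma path_minus_sub (T : finType) (e : rel T) t x s :
  path (rel_minus e t) x s -> path e x s.
Proof.
apply: sub_path => a b /and3P [] //.
Qed.

Lemma core (T : finType) (e : rel T) u w x :
  is_tree e -> e u w -> x != u -> x != w ->
  connect (rel_minus e u) w x -> connect (rel_minus e w) u x -> False.
Proof.
case=> esym eirr _ nocyc euw xu xw.
move=> /connectP [p0 pp0 xp] /connectP [q0 pq0 xq].
case: (shortenP pp0) xp => p pp up sub0 xp; clear sub0 pp0 p0.
case: (shortenP pq0) xq => q pq uq _ xq; clear pq0 q0.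
have pau := path_avoid pp. have qaw := path_avoid pq.
have wu : w != u by apply/negP => /eqP E; rewrite E eirr in euw.
have hq : has (mem (w :: p)) q.
  apply/hasP; exists (last u q); last by rewrite -xq xp; apply: mem_last.
  case: q {pq uq qaw} xq xu => [|h q] /=; first by move=> ->; rewrite eqxx.
  by move=> _ _; apply: mem_last.
have [q1 [y [q2 [Eq yin nq1]]]] := split_has hq.
have yw : y != w.
  by move: qaw; rewrite Eq all_cat /= => /and3P [_ ->].
have yp : y \in p by move: yin; rewrite /= in_cons (negbTE yw).
have yu : y != u by move/allP: pau => /(_ y yp).
have hp : has (pred1 y) p by apply/hasP; exists y => //=.
case: (split_has hp) => p1 [z [p2 [Ep zy nq2]]]; move/eqP: zy => zy.
subst z.
have pe := path_minus_sub pp. have qe := path_minus_sub pq.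
have uq1 : uniq q1 by move: uq; rewrite Eq /= cat_uniq => /andP [_ /andP []].
have uq1' : u \notin q1 by move: uq; rewrite Eq /= mem_cat negb_or => /andP [/andP []].
have up1 : uniq p1 by move: up; rewrite Ep /= cat_uniq => /andP [_ /andP []].
have wp1 : w \notin p1 by move: up; rewrite Ep /= mem_cat negb_or => /andP [/andP []].
have p1p : {subset p1 <= p} by move=> z zp; rewrite Ep mem_cat zp.
have yp1 : y \notin p1 by rewrite -has_pred1.
have up1' : u \notin p1.
  apply/negP => /p1p H; move/allP: pau => /(_ u H); rewrite eqxx.
  done.
apply: (negP (nocyc (u :: q1 ++ y :: rcons (rev p1) w) _ _)).
- rewrite /= mem_cat negb_or uq1' /= in_cons negb_or eq_sym yu /= mem_rcons in_cons negb_or eq_sym wu mem_rev up1' /=.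
  rewrite cat_uniq uq1 has_sym /= mem_rcons in_cons negb_or yw mem_rev yp1 rcons_uniq mem_rev wp1 rev_uniq up1 !andbT.
  apply: contra nq1; apply: sub_has => z.
  rewrite /= !in_cons mem_rcons in_cons mem_rev.
  case/orP => [/eqP ->|/orP [->|/p1p ->]] //; by rewrite ?yp ?orbT.
- by rewrite /= size_cat /= size_rcons !addnS.
- rewrite /= rcons_cat cat_path /=.
  move: qe; rewrite Eq cat_path /= => /and3P [-> -> _] /=.
  rewrite rcons_path last_rcons esym euw andbT.
  move: pe; rewrite Ep -cat_rcons cat_path => /andP [pe1 _].
  rewrite -rev_path belast_rcons rev_cons in pe1.
  rewrite last_rcons in pe1; rewrite -(eq_path (e := fun x => e^~ x)) //.
Qed.

Lemma rm_sym (T : finType) (e : rel T) t : symmetric e -> symmetric (rel_minus e t).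
Proof. by move=> es x y; rewrite /rel_minus (es x y); case: (x != t); case: (y != t); rewrite ?andbF ?andbT. Qed.

Lemma cross_lb (n K : nat) (T : finType) (e : rel T) (X : T -> {set Gvert n K}) t
  (W : pairs n) (a : 'I_n) : a \in val W ->
  #|[pred l : 'I_K | crosses e X t (inr (W,l)) (inl a)]| <= cross (@Gadj n K) e X t.
Proof.
move=> Ha.
rewrite -(card_in_imset (f := fun l : 'I_K => [set (inr (W,l) : Gvert n K); inl a])).
  apply: subset_leq_card; apply/subsetP => E /imsetP [l Hl ->]; rewrite inE.
  apply/existsP; exists (inr (W,l)); apply/existsP; exists (inl a).
  by rewrite eqxx /= Ha; rewrite inE in Hl.
move=> l l' _ _ /= E.
have : (inr (W,l) : Gvert n K) \in [set inr (W,l'); inl a] by rewrite -E set21.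
by rewrite in_set2 orbF => /eqP [].
Qed.

Lemma bad_lb (n K : nat) (T : finType) (X : T -> {set Gvert n K}) t (W : pairs n) :
  #|[pred l : 'I_K | inr (W,l) \in X t]| <= #|X t|.
Proof.
rewrite -(card_in_imset (f := fun l : 'I_K => (inr (W,l) : Gvert n K))).
  by apply: subset_leq_card; apply/subsetP => v /imsetP [l Hl ->]; rewrite inE in Hl.
by move=> l l' _ _ [].
Qed.

Lemma count4 (I : finType) (A B C D : {pred I}) :
  (forall i, [|| i \in A, i \in B, i \in C | i \in D]) ->
  #|I| <= #|A| + #|B| + #|C| + #|D|.
Proof.
move=> H.
have leU : forall (P Q : {pred I}), #|[predU P & Q]| <= #|P| + #|Q|.
  by move=> P Q; rewrite -cardUI leq_addr.
apply: leq_trans (_ : #|[predU A & [predU B & [predU C & D]]]| <= _).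
  by apply: subset_leq_card; apply/subsetP => i _; rewrite !inE.
apply: leq_trans (leU _ _) _; rewrite -!addnA leq_add2l.
apply: leq_trans (leU _ _) _; rewrite leq_add2l.
exact: leU.
Qed.

Lemma arith (K alpha k x1 x2 b1 b2 p1 p2 C1 C2 : nat) :
  2 * alpha + 2 * k < K -> K <= b1 + b2 + p1 + p2 -> b1 <= x1 -> b2 <= x2 ->
  x1 <= alpha -> x2 <= alpha -> p1 <= C1 -> p2 <= C2 -> C1 < k.+1 -> C2 < k.+1 -> False.
Proof. move=> *; lia. Qed.

Lemma pick2 (T : Type) (f : T -> nat) k t1 t2 :
  (f t1 < k.+1 -> f t2 < k.+1 -> False) -> exists t, k.+1 <= f t.
Proof.
move=> H; case: (leqP k.+1 (f t1)) => c1; first by exists t1.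
case: (leqP k.+1 (f t2)) => c2; first by exists t2.
by case: (H c1 c2).
Qed.

Lemma conclude n K (T : finType) (e : rel T) (X : T -> {set Gvert n K}) alpha k
  (W : pairs n) a b t1 t2 : thickness_le X alpha -> a \in val W -> b \in val W ->
  2 * alpha + 2 * k < K ->
  (forall l : 'I_K, [|| inr (W,l) \in X t1, inr (W,l) \in X t2,
      crosses e X t1 (inr (W,l)) (inl b) | crosses e X t2 (inr (W,l)) (inl a)]) ->
  exists t, k.+1 <= cross (@Gadj n K) e X t.
Proof.
move=> th Ha Hb HK H.
pose B1 : {pred 'I_K} := [pred l : 'I_K | inr (W,l) \in X t1].
pose B2 : {pred 'I_K} := [pred l : 'I_K | inr (W,l) \in X t2].
pose P1 : {pred 'I_K} := [pred l : 'I_K | crosses e X t1 (inr (W,l)) (inl b)].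
pose P2 : {pred 'I_K} := [pred l : 'I_K | crosses e X t2 (inr (W,l)) (inl a)].
have HK2 : #|'I_K| <= #|B1| + #|B2| + #|P1| + #|P2| := count4 H.
rewrite card_ord in HK2.
have h1 : #|B1| <= #|X t1| := bad_lb X t1 W.
have h2 : #|B2| <= #|X t2| := bad_lb X t2 W.
have h3 : #|P1| <= cross (@Gadj n K) e X t1 := cross_lb e X t1 Hb.
have h4 : #|P2| <= cross (@Gadj n K) e X t2 := cross_lb e X t2 Ha.
have h5 := th t1; have h6 := th t2.
apply: (@pick2 _ (cross (@Gadj n K) e X) k t1 t2) => c1 c2.
exact: (arith HK HK2 h1 h2 h5 h6 h3 h4 c1 c2).
Qed.

Lemma sep (T : finType) (e : rel T) s s' : is_tree e -> s != s' -> ~~ e s s' ->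
  exists t, [/\ t != s, t != s' & ~~ connect (rel_minus e t) s s'].
Proof.
move=> tr ss' ness'; have tr' := tr; case: tr' => esym eirr conn _.
have /connectP [p0 pp0 xp] := conn s s'.
case: (shortenP pp0) xp => p pp up _ xp; clear pp0 p0.
case: p pp up xp => [|v p'] /=; first by move=> _ _ E; rewrite E eqxx in ss'.
move=> /andP [esv pv] /andP [sv up'] xp.
have vs' : v != s'.
  by apply/negP => /eqP E; rewrite -E esv in ness'.
have vs : v != s by apply/negP => /eqP E; rewrite E eirr in esv.
exists v; split => //; apply/negP => cn.
apply: (core tr esv _ _ _ cn); first by rewrite eq_sym.
  by rewrite eq_sym.
apply/connectP; exists p'; last by [].
apply: (sub_in_path (P := predC1 s)) pv.
  by move=> x y; rewrite !inE => xs ys exy; rewrite /rel_minus exy xs ys.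
rewrite /= vs /=; apply/allP => z zp; rewrite /= .
by apply/negP => /eqP E; rewrite -E in_cons zp orbT in sv.
Qed.

Theorem lemma3p3 (alpha k : nat) : 0 < alpha -> 0 < k ->
  ecrw_ge (@Gadj alpha.+1 (3 * k + 3 * alpha - 1)) alpha k.+1.
Proof.
move=> ha hk T e X [tr disj cover] th.
set K := 3 * k + 3 * alpha - 1.
have HK : 2 * alpha + 2 * k < K by rewrite /K; lia.
have [t0 _] := cover (inl ord0).
pose bag (v : Gvert alpha.+1 K) := odflt t0 [pick t | v \in X t].
have bagP : forall v, v \in X (bag v).
  move=> v; rewrite /bag; case: pickP => [t //|H].
  by have [t Ht] := cover v; rewrite H in Ht.
have bagU : forall v t, v \in X t -> bag v = t.
  move=> v t Ht; apply/eqP; apply: contraT => ne.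
  by have := disjointFr (disj _ _ ne) (bagP v); rewrite Ht.
have [a [b ab]] : exists a b : 'I_alpha.+1, bag (inl a) != bag (inl b).
  case: (boolP [exists a, exists b, bag (inl a) != bag (inl b)]).
    by move=> /existsP [a /existsP [b H]]; exists a, b.
  rewrite negb_exists => /forallP H; exfalso.
  have H' : forall i, bag (inl i) = bag (inl ord0).
    move=> i; move: (H i); rewrite negb_exists => /forallP /(_ ord0).
    by rewrite negbK => /eqP.
  have : #|[set (inl i : Gvert alpha.+1 K) | i : 'I_alpha.+1]| <= #|X (bag (inl ord0))|.
    apply: subset_leq_card; apply/subsetP => v /imsetP [i _ ->].
    by rewrite -(H' i); apply: bagP.
  rewrite card_imset; last by move=> x y [].
  rewrite ?cardsT card_ord => H2.
  by have := leq_trans H2 (th _); rewrite ltnn.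
have anb : a != b by apply: contraNneq ab => ->.
have W2 : #|[set a; b]| == 2 by rewrite cards2 anb.
pose W : pairs alpha.+1 := exist _ [set a; b] W2.
have Ha : a \in val W by rewrite /= set21.
have Hb : b \in val W by rewrite /= set22.
have esym : symmetric e by case: tr.
have csym : forall t, connect_sym (rel_minus e t).
  by move=> t; apply: sym_connect_sym; apply: rm_sym.
have bs := bagP (inl a); have bs' := bagP (inl b).
move: ab bs bs'; set s := bag (inl a); set s' := bag (inl b) => ab bs bs'.
case: (boolP (e s s')) => es.
  apply: (conclude (W:=W) (a:=a) (b:=b) (t1:=s) (t2:=s') th Ha Hb HK) => l.
  have Hr := bagP (inr (W,l)); move: Hr; set r := bag _ => Hr.
  case: (eqVneq r s) => [Er|rs]; first by rewrite -Er Hr.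
  case: (eqVneq r s') => [Er|rs']; first by rewrite -Er Hr orbT.
  case: (boolP (connect (rel_minus e s) r s')) => h1; last first.
    apply/orP; right; apply/orP; right; apply/orP; left.
    by apply/existsP; exists r; apply/existsP; exists s'; rewrite Hr bs' rs (eq_sym s' s) ab h1.
  case: (boolP (connect (rel_minus e s') r s)) => h2.
    exfalso; apply: (core tr es rs rs').
      by rewrite csym.
    by rewrite csym.
  apply/orP; right; apply/orP; right; apply/orP; right.
  by apply/existsP; exists r; apply/existsP; exists s; rewrite Hr bs rs' ab h2.
have [t [ts ts' nc]] := sep tr ab es.
apply: (conclude (W:=W) (a:=a) (b:=b) (t1:=t) (t2:=t) th Ha Hb HK) => l.
have Hr := bagP (inr (W,l)); move: Hr; set r := bag _ => Hr.
case: (eqVneq r t) => [Er|rt]; first by rewrite -Er Hr.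
case: (boolP (connect (rel_minus e t) r s)) => h1.
  apply/orP; right; apply/orP; right; apply/orP; left.
  apply/existsP; exists r; apply/existsP; exists s'; rewrite Hr bs' rt (eq_sym s' t) ts' /=.
  apply/negP => h2; apply: (negP nc); apply: connect_trans h2.
  by rewrite csym.
apply/orP; right; apply/orP; right; apply/orP; right.
by apply/existsP; exists r; apply/existsP; exists s; rewrite Hr bs rt (eq_sym s t) ts h1.
Qed.
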